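(* Let $X$ be a finite simple graph on vertex set $\{1,\dots,n\}$ and let $\pi\in S_X$. For each $\star\in\{\uparrow,\downarrow,\updownarrow\}$ (increasing, decreasing, mixed), the extended threshold SDS map $\mathbf{F}^\star_\pi$ has no periodic orbit of length $\ge 2$, i.e. all its periodic points are fixed points. For each $\star\in\{\uparrow,\downarrow,\updownarrow\}$, the extended threshold GCA map $\mathbf{F}^\star$ has no periodic orbit of length $\ge 3$, i.e. every periodic orbit has length $1$ or $2$.
   Context: Let $X$ be a finite simple graph with vertices $1,\dots,n$; $d(v)$ denotes the degree of $v$ and $n[v]$ the closed neighborhood of $v$ (including $v$). An extended vertex state is $s_v=(x_v,k_v)\in\{0,1\}\times\{1,2,\dots,d(v)+1\}$; the extended system state is $s=(s_1,\dots,s_n)\in\mathcal{S}=\prod_v(\{0,1\}\times\{1,\dots,d(v)+1\})$. Write $\sigma(x[v])=|\{u\in n[v]: x_u=1\}|$. The vertex function $f_v$ maps $s_v$ to $(x_v',k_v')$ where $x_v'=1$ if $\sigma(x[v])\ge k_v$ and $x_v'=0$ otherwise, and $k_v'$ is given by: increasing ($\uparrow$): $k_v'=k_v+1$ if $x_v=0$ and $\sigma(x[v])\ge k_v$, else $k_v'=k_v$; decreasing ($\downarrow$): $k_v'=k_v-1$ if $x_v=1$ and $\sigma(x[v])<k_v$, else $k_v'=k_v$; mixed ($\updownarrow$): $k_v'=k_v+1$ if $x_v=0$ and $\sigma(x[v])\ge k_v$, $k_v'=k_v-1$ if $x_v=1$ and $\sigma(x[v])<k_v$, else $k_v'=k_v$.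 The local map $F_v:\mathcal{S}\to\mathcal{S}$ replaces $s_v$ by $f_v$ applied to the current states of $n[v]$ and leaves other coordinates unchanged. For a permutation $\pi=(\pi_1,\dots,\pi_n)$ of the vertices, the sequential (SDS) map is $\mathbf{F}_\pi=F_{\pi_n}\circ\cdots\circ F_{\pi_1}$; the parallel (GCA) map $\mathbf{F}$ updates all vertices simultaneously, $\mathbf{F}(s)_v=f_v(s[v])$. A periodic orbit of length $m$ is a cycle of $m$ distinct states in the phase space (the functional graph $s\mapsto\phi(s)$). *)

(* Defs.v *)
From mathcomp Require Import all_boot.
From mathcomp Require Import perm.
Set Implicit Arguments. Unset Strict Implicit. Unset Printing Implicit Defensive.

Inductive mode := Incr | Decr | Mixed.

Section Threshold.
Variables (n : nat) (e : rel 'I_n).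

Definition cnbhd (v : 'I_n) : {set 'I_n} := [set u | (u == v) || e v u].
Definition deg (v : 'I_n) : nat := #|[set u | e v u]|.

(* an extended system state: vertex v |-> (x_v, k_v) *)
Definition state := {ffun 'I_n -> bool * nat}.

Definition valid_state (s : state) : bool :=
  [forall v, (1 <= (s v).2 <= deg v + 1)%N].

Definition sigma (s : state) (v : 'I_n) : nat :=
  #|[set u in cnbhd v | (s u).1]|.

Definition fv (m : mode) (s : state) (v : 'I_n) : bool * nat :=
  let x := (s v).1 in let k := (s v).2 in
  let act := (k <= sigma s v)%N in
  (act,
   match m with
   | Incr => if ~~ x && act then k.+1 else k
   | Decr => if x && ~~ act then k.-1 else k
   | Mixed => if ~~ x && act then k.+1 else if x && ~~ act then k.-1 else k
   end).

Definition Floc (m : mode) (v : 'I_n) (s : state) : state :=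
  [ffun u => if u == v then fv m s v else s u].

Definition SDS (m : mode) (pi : {perm 'I_n}) (s : state) : state :=
  foldl (fun t i => Floc m (pi i) t) s (enum 'I_n).

Definition GCA (m : mode) (s : state) : state := [ffun v => fv m s v].

Definition periodic_orbit (phi : state -> state) (c : seq state) : Prop :=
  [/\ c != [::], uniq c, all valid_state c & cycle (fun a b => phi a == b) c].

End Threshold.

Definition simple_graph (n : nat) (e : rel 'I_n) : Prop :=
  symmetric e /\ irreflexive e.

(* Main.v *)
Require Import Defs.
From mathcomp Require Import all_boot all_algebra zify perm.
Import GRing.Theory Num.Theory.
Set Implicit Arguments. Unset Strict Implicit.

Definition good (T : Type) (V : T -> int) (W : T -> nat) (f : T -> T) :=
  forall s, (V (f s) <= V s)%R /\
    (V (f s) = V s -> (W (f s) <= W s)%N /\ (W (f s) = W s -> f s = s)).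

Lemma good_id T V W : @good T V W id.
Proof. by move=> s; split. Qed.

Lemma good_comp T V W f g : @good T V W f -> good V W g -> good V W (g \o f).
Proof.
move=> hf hg s /=.
have [h1 h2] := hf s; have [h3 h4] := hg (f s).
split; first lia.
move=> E.
have E1 : V (f s) = V s by lia.
have E2 : V (g (f s)) = V (f s) by lia.
have [h5 h6] := h2 E1; have [h7 h8] := h4 E2.
split; first lia.
move=> EW.
have EW1 : W (f s) = W s by lia.
have EW2 : W (g (f s)) = W (f s) by lia.
by rewrite (h8 EW2) (h6 EW1).
Qed.

Lemma good_foldl T V W (I : Type) (F : I -> T -> T) (l : seq I) :
  (forall i, @good T V W (F i)) -> good V W (fun s => foldl (fun t i => F i t) s l).
Proof.
move=> hF; elim: l => [|i l IH] /=; first exact: good_id.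
exact: (good_comp (hF i) IH).
Qed.

Lemma good_iter T V W f p : @good T V W f -> good V W (iter p f).
Proof.
move=> hf; elim: p => [|p IH]; first exact: good_id.
exact: (good_comp IH hf).
Qed.

Lemma good_fix T V W f p s : @good T V W f -> iter p.+1 f s = s -> f s = s.
Proof.
move=> hf; rewrite iterSr => E.
have hg := good_iter p hf.
have [h1 h2] := hf s; have [h3 h4] := hg (f s).
rewrite E in h3 h4.
have E1 : V (f s) = V s by lia.
have [h5 h6] := h2 E1; have [h7 h8] := h4 (esym E1).
apply: h6; lia.
Qed.

Lemma path_iter (T : eqType) (f : T -> T) x q : path (fun a b => f a == b) x q ->
  forall i, (i < size q)%N -> nth x q i = iter i.+1 f x.
Proof.
elim: q x => [|y q IH] x //= /andP[/eqP <- hp] [|i] //= hi.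
by rewrite (set_nth_default (f x)) // (IH _ hp i hi) -iterSr.
Qed.

Lemma cycle_iter (T : eqType) (f : T -> T) a l : cycle (fun x y => f x == y) (a :: l) ->
  iter (size l).+1 f a = a /\ (forall i, (i < size l)%N -> nth a l i = iter i.+1 f a).
Proof.
rewrite /cycle => hp; have H := path_iter hp.
split.
  have := H (size l); rewrite size_rcons ltnSn nth_rcons ltnn eqxx => h; by rewrite -h.
move=> i hi; have := H i; rewrite size_rcons nth_rcons hi => h; apply: h; lia.
Qed.

Lemma orbit1 (T : eqType) V W (f : T -> T) (c : seq T) : @good T V W f -> c != [::] -> uniq c ->
  cycle (fun x y => f x == y) c -> size c = 1%N.
Proof.
case: c => [|a l] // hf _ hu hc.
have [h1 h2] := cycle_iter hc.
have fa := good_fix hf h1.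
case: l hu hc h1 h2 => [|b l] // hu _ _ h2.
have := h2 0%N erefl; rewrite /= fa => eb.
by move: hu; rewrite /= eb inE eqxx.
Qed.

Lemma iter_comp2 (T : eqType) (f : T -> T) m x : iter m (f \o f) x = iter (m + m) f x.
Proof. elim: m => [|m IH] //=; rewrite IH addnS. by []. Qed.

Lemma orbit2 (T : eqType) V W (f : T -> T) (c : seq T) : @good T V W (f \o f) -> c != [::] -> uniq c ->
  cycle (fun x y => f x == y) c -> (size c <= 2)%N.
Proof.
case: c => [|a l] // hf _ hu hc.
have [h1 h2] := cycle_iter hc.
have h3 : iter (size l).+1 (f \o f) a = a by rewrite iter_comp2 iterD h1.
have fa := good_fix hf h3.
case: l hu hc h1 h2 h3 => [|b [|d l]] // hu _ _ h2 _.
have := h2 1%N erefl; rewrite /= -[f (f a)]/((f \o f) a) fa => eb.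
by move: hu; rewrite /= eb !inE eqxx orbT.
Qed.

Definition Uv n (s : state n) (w : 'I_n) : nat := ((s w).2 + ~~ (s w).1)%N.
Definition Tv n (s : state n) (w : 'I_n) : nat := (Uv s w).-1.
Definition Nb n (e : rel 'I_n) (s : state n) (v : 'I_n) : nat :=
  \sum_u (e v u && (s u).1 : nat).

Lemma sigmaE n (e : rel 'I_n) (irr : irreflexive e) (s : state n) (v : 'I_n) :
  sigma e s v = ((s v).1 + Nb e s v)%N.
Proof.
rewrite /sigma (cardsD1 v) !inE eqxx /=; congr (_ + _)%N.
rewrite -sum1dep_card big_mkcond /Nb; apply: eq_bigr => u _.
rewrite /cnbhd !inE.
case: (eqVneq u v) => [->|huv] /=; first by rewrite irr.
by case: (e v u); case: (s u).1.
Qed.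

Lemma actE n (e : rel 'I_n) (irr : irreflexive e) (s : state n) (v : 'I_n) :
  ((s v).2 <= sigma e s v)%N = (Tv s v <= Nb e s v)%N.
Proof.
rewrite sigmaE // /Tv /Uv; case: (s v) => [[] k] /=.
  rewrite addn0; case: k => //.
by rewrite addn1.
Qed.

Definition Up (p : bool * nat) : nat := (p.2 + ~~ p.1)%N.
Definition rho (p : bool * nat) : nat := (2 * p.2 + ~~ p.1)%N.

Lemma fv_mixedU n (e : rel 'I_n) (s : state n) (v : 'I_n) :
  Up (fv e Mixed s v) = Up (s v).
Proof.
rewrite /fv /Up; move: (sigma e s v) => sg; case: (s v) => [[] k] /=;
case: (leqP k sg) => h /=; lia.
Qed.

Lemma fv_mixed_same n (e : rel 'I_n) (s : state n) (v : 'I_n) :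
  (fv e Mixed s v).1 = (s v).1 -> fv e Mixed s v = s v.
Proof.
rewrite /fv; move: (sigma e s v) => sg; case: (s v) => [[] k] /=;
case: (leqP k sg) => h //=.
Qed.

Lemma fv_incr n (e : rel 'I_n) (s : state n) (v : 'I_n) :
  (rho (s v) <= rho (fv e Incr s v))%N /\
  (rho (fv e Incr s v) = rho (s v) -> fv e Incr s v = s v).
Proof.
rewrite /fv /rho; move: (sigma e s v) => sg; case: (s v) => [[] k] /=;
case: (leqP k sg) => h /=; split => //; lia.
Qed.

Lemma fv_decr n (e : rel 'I_n) (s : state n) (v : 'I_n) :
  (rho (fv e Decr s v) <= rho (s v))%N /\
  (rho (fv e Decr s v) = rho (s v) -> fv e Decr s v = s v).
Proof.
rewrite /fv /rho; move: (sigma e s v) => sg; case: (s v) => [[] k] /=;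
case: (leqP k sg) => h /=; split => //; lia.
Qed.

Lemma sum_eq_pw (I : finType) (F G : I -> nat) :
  (forall i, F i <= G i)%N -> (\sum_i F i = \sum_i G i)%N -> forall i, F i = G i.
Proof.
move=> h E i; move: E; rewrite (bigD1 i) //= [X in _ = X](bigD1 i) //=.
have := @leq_sum _ (index_enum I) (fun j => j != i) F G (fun j _ => h j).
have := h i; lia.
Qed.

Definition pointwise n (e : rel 'I_n) m (f : state n -> state n) :=
  forall s w, f s w = s w \/ f s w = fv e m s w.

Lemma Floc_pw n (e : rel 'I_n) m v : pointwise e m (Floc e m v).
Proof. move=> s w; rewrite ffunE; case: (eqVneq w v) => [->|]; by auto. Qed.

Lemma GCA_pw n (e : rel 'I_n) m : pointwise e m (GCA e m).
Proof. move=> s w; rewrite ffunE; by auto. Qed.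

Definition Prho n (s : state n) : nat := \sum_w rho (s w).

Lemma good_incr n (e : rel 'I_n) f : pointwise e Incr f ->
  good (fun s => - (Prho s)%:Z)%R (fun _ => 0%N) f.
Proof.
move=> hf s.
have hle : forall w, (rho (s w) <= rho (f s w))%N.
  move=> w; case: (hf s w) => ->; [by [] | exact: (fv_incr e s w).1].
have hs : (Prho s <= Prho (f s))%N by apply: leq_sum => w _.
split; first lia.
move=> E; split => // _.
have E' : Prho s = Prho (f s) by lia.
apply/ffunP => w; have := sum_eq_pw hle E' w.
case: (hf s w) => -> // h; exact: (fv_incr e s w).2 (esym h).
Qed.

Lemma good_decr n (e : rel 'I_n) f : pointwise e Decr f ->
  good (fun s => (Prho s)%:Z)%R (fun _ => 0%N) f.
Proof.
move=> hf s.
have hle : forall w, (rho (f s w) <= rho (s w))%N.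
  move=> w; case: (hf s w) => ->; [by [] | exact: (fv_decr e s w).1].
have hs : (Prho (f s) <= Prho s)%N by apply: leq_sum => w _.
split; first lia.
move=> E; split => // _.
have E' : Prho (f s) = Prho s by lia.
apply/ffunP => w; have := sum_eq_pw hle E' w.
case: (hf s w) => -> // h; exact: (fv_decr e s w).2 h.
Qed.

Definition XX n (s : state n) (w : 'I_n) : nat := (s w).1.
Definition Ssum n (e : rel 'I_n) (s : state n) : nat := \sum_w XX s w * Nb e s w.
Definition Rr n (e : rel 'I_n) (s : state n) (v : 'I_n) : nat :=
  \sum_(w | w != v) \sum_(u | u != v) XX s w * (e w u && (s u).1).

Lemma Nb_off n (e : rel 'I_n) (irr : irreflexive e) (s : state n) v :
  Nb e s v = \sum_(u | u != v) (e v u && (s u).1 : nat).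
Proof. by rewrite /Nb (bigD1 v) //= irr. Qed.

Lemma Sdecomp n (e : rel 'I_n) (sym : symmetric e) (irr : irreflexive e) (s : state n) v :
  Ssum e s = (2 * (XX s v * Nb e s v) + Rr e s v)%N.
Proof.
rewrite /Ssum (bigD1 v) //=.
have -> : \sum_(w | w != v) XX s w * Nb e s w =
   (\sum_(w | w != v) XX s w * (e w v && (s v).1) + Rr e s v)%N.
  rewrite /Rr -big_split /=; apply: eq_bigr => w _.
  by rewrite /Nb (bigD1 v) //= mulnDr big_distrr.
suff -> : \sum_(w | w != v) XX s w * (e w v && (s v).1) = XX s v * Nb e s v by lia.
rewrite (Nb_off irr) big_distrr; apply: eq_bigr => w _.
rewrite /XX (sym w v); by case: (s w).1; case: (s v).1; case: (e v w).
Qed.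

Definition Tsum n (s : state n) : nat := \sum_w Tv s w * XX s w.
Definition Emix n (e : rel 'I_n) (s : state n) : int := ((2 * Tsum s)%:Z - (Ssum e s)%:Z)%R.
Definition Zc n (s : state n) : nat := \sum_w (~~ (s w).1 : nat).

Lemma Tv_mixed n (e : rel 'I_n) f : pointwise e Mixed f -> forall s w, Tv (f s) w = Tv s w.
Proof.
move=> hf s w; rewrite /Tv /Uv; case: (hf s w) => -> //.
by have := fv_mixedU e s w; rewrite /Up => ->.
Qed.

Lemma good_mixed_loc n (e : rel 'I_n) (sym : symmetric e) (irr : irreflexive e) v :
  good (@Emix n e) (@Zc n) (Floc e Mixed v).
Proof.
move=> s; set s' := Floc e Mixed v s.
have off : forall w, w != v -> s' w = s w by move=> w hw; rewrite /s' ffunE (negbTE hw).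
have onv : s' v = fv e Mixed s v by rewrite /s' ffunE eqxx.
have hT : forall w, Tv s' w = Tv s w := Tv_mixed (Floc_pw e Mixed v) s.
have hN : Nb e s' v = Nb e s v.
  rewrite !(Nb_off irr); apply: eq_bigr => u hu; by rewrite off.
have hR : Rr e s' v = Rr e s v.
  apply: eq_bigr => w hw; apply: eq_bigr => u hu; by rewrite /XX !off.
have hA : \sum_(w | w != v) Tv s' w * XX s' w = \sum_(w | w != v) Tv s w * XX s w.
  apply: eq_bigr => w hw; by rewrite hT /XX off.
have hZ : \sum_(w | w != v) (~~ (s' w).1 : nat) = \sum_(w | w != v) (~~ (s w).1 : nat).
  apply: eq_bigr => w hw; by rewrite off.
have hb : (s' v).1 = (Tv s v <= Nb e s v)%N by rewrite onv /= actE.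
have dT : forall t : state n, Tsum t = (Tv t v * XX t v + \sum_(w | w != v) Tv t w * XX t w)%N.
  by move=> t; rewrite /Tsum (bigD1 v).
have dZ : forall t : state n, Zc t = (~~ (t v).1 + \sum_(w | w != v) (~~ (t w).1 : nat))%N.
  by move=> t; rewrite /Zc (bigD1 v).
have hsame : (s' v).1 = (s v).1 -> s' = s.
  move=> h; apply/ffunP => w; case: (eqVneq w v) => [->|hw]; last exact: off.
  rewrite onv; apply: fv_mixed_same; by rewrite -onv.
rewrite /Emix !dT !dZ !(Sdecomp sym irr _ v) hR hA hZ hN hT /XX.
move: hsame; rewrite hb.
move: (Tv s v) (Nb e s v) (s v).1 => T N a.
case: (leqP T N) => hTN; case: a => /= hsame; split => //; try lia.
- move=> E; split; first lia. move=> _; exact: hsame.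
- move=> E; split; first lia. move=> _; exact: hsame.
Qed.

Lemma state_eq n (s t : state n) :
  (forall w, (t w).1 = (s w).1) -> (forall w, Uv t w = Uv s w) -> t = s.
Proof.
move=> h1 h2; apply/ffunP => w; have := h2 w; rewrite /Uv h1.
case: (t w) (s w) (h1 w) => [x k] [y l] /= -> ?; congr pair; lia.
Qed.

Lemma Uv_mixed n (e : rel 'I_n) f : pointwise e Mixed f -> forall s w, Uv (f s) w = Uv s w.
Proof.
move=> hf s w; rewrite /Uv; case: (hf s w) => -> //.
by have := fv_mixedU e s w; rewrite /Up => ->.
Qed.

Definition Phi n (e : rel 'I_n) (a b : state n) : int :=
  ((\sum_w Tv a w * (XX a w + XX b w))%:Z - (\sum_w XX b w * Nb e a w)%:Z)%R.

Lemma Ssym n (e : rel 'I_n) (sym : symmetric e) (a b : state n) :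
  \sum_w XX b w * Nb e a w = \sum_w XX a w * Nb e b w.
Proof.
rewrite /Nb.
under eq_bigr => w _ do rewrite big_distrr.
under [RHS]eq_bigr => w _ do rewrite big_distrr.
rewrite exchange_big /=; apply: eq_big => // u _; apply: eq_big => // w _.
rewrite /XX (sym w u); by case: (b w).1; case: (a u).1; case: (e u w).
Qed.

Lemma Phi_step n (e : rel 'I_n) (sym : symmetric e) (irr : irreflexive e) (a : state n) :
  let b := GCA e Mixed a in let c := GCA e Mixed b in
  (Phi e b c <= Phi e a b)%R /\
  (Phi e b c = Phi e a b -> forall v, (XX a v <= XX c v)%N).
Proof.
move=> b c.
have hT1 : forall w, Tv b w = Tv a w := Tv_mixed (GCA_pw e Mixed) a.
have hT2 : forall w, Tv c w = Tv b w := Tv_mixed (GCA_pw e Mixed) b.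
have hc : forall w, XX c w = (Tv a w <= Nb e b w)%N.
  by move=> w; rewrite /XX /c ffunE /= actE // hT1.
pose al w := (Tv a w * (XX b w + XX c w) + XX a w * Nb e b w)%N.
pose be w := (Tv a w * (XX a w + XX b w) + XX c w * Nb e b w)%N.
have hab : forall w, (al w <= be w)%N.
  move=> w; rewrite /al /be hc /XX; move: (a w).1 (b w).1 (Tv a w) (Nb e b w).
  by move=> x y T N; case: (leqP T N) => h; case: x; case: y => /=; nia.
have sal : \sum_w al w = (\sum_w Tv b w * (XX b w + XX c w) + \sum_w XX a w * Nb e b w)%N.
  rewrite -big_split /=; apply: eq_bigr => w _; by rewrite /al hT1.
have sbe : \sum_w be w = (\sum_w Tv a w * (XX a w + XX b w) + \sum_w XX c w * Nb e b w)%N.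
  by rewrite -big_split.
have hsum : (\sum_w al w <= \sum_w be w)%N by apply: leq_sum => w _.
rewrite /Phi (Ssym sym a b).
split; first lia.
move=> E v.
have E' : \sum_w al w = \sum_w be w by lia.
have := sum_eq_pw hab E' v; rewrite /al /be hc /XX.
move: (a v).1 (b v).1 (Tv a v) (Nb e b v) => x y T N.
by case: (leqP T N) => h; case: x; case: y => //=; nia.
Qed.

Lemma good_mixed_gca n (e : rel 'I_n) (sym : symmetric e) (irr : irreflexive e) :
  good (fun s => Phi e s (GCA e Mixed s)) (@Zc n) (GCA e Mixed \o GCA e Mixed).
Proof.
move=> s /=.
have [h1 h2] := Phi_step sym irr s.
have [h3 h4] := Phi_step sym irr (GCA e Mixed s).
move: h1 h2 h3 h4.
set b := GCA e Mixed s; set c := GCA e Mixed b; set d := GCA e Mixed c.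
move=> h1 h2 h3 h4.
split; first lia.
move=> E.
have hle := h2 ltac:(lia).
have hle' : forall w, (~~ (c w).1 <= ~~ (s w).1)%N.
  move=> w; have := hle w; rewrite /XX; by case: (c w).1; case: (s w).1.
split; first by apply: leq_sum => w _.
move=> EZ; apply: state_eq.
  move=> w; have := sum_eq_pw hle' EZ w; have := hle w; rewrite /XX.
  by case: (c w).1; case: (s w).1.
move=> w; rewrite /c /b !(Uv_mixed (GCA_pw e Mixed)) //.
Qed.

Theorem theorem3p1 (n : nat) (e : rel 'I_n) (pi : {perm 'I_n}) :
  simple_graph e ->
  forall m : mode,
    (forall c : seq (state n), periodic_orbit e (SDS e m pi) c -> size c = 1%N) /\
    (forall c : seq (state n), periodic_orbit e (GCA e m) c -> (size c <= 2)%N).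
Proof.
case=> sym irr m.
have gS : forall V W, (forall v, good V W (Floc e m v)) ->
    forall c : seq (state n), periodic_orbit e (SDS e m pi) c -> size c = 1%N.
  move=> V W hl c [h1 h2 _ h4]; apply: (orbit1 _ h1 h2 h4).
  exact: (good_foldl _ (fun i => hl (pi i))).
have gG2 : forall V W, good V W (GCA e m \o GCA e m) ->
    forall c : seq (state n), periodic_orbit e (GCA e m) c -> (size c <= 2)%N.
  move=> V W hg c [h1 h2 _ h4]; exact: (orbit2 hg h1 h2 h4).
case: m gS gG2 => gS gG2; split.
- apply: (gS _ _ (fun v => good_incr (Floc_pw e Incr v))).
- apply: (gG2 _ _ (good_comp (good_incr (GCA_pw e Incr)) (good_incr (GCA_pw e Incr)))).
- apply: (gS _ _ (fun v => good_decr (Floc_pw e Decr v))).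
- apply: (gG2 _ _ (good_comp (good_decr (GCA_pw e Decr)) (good_decr (GCA_pw e Decr)))).
- apply: (gS _ _ (good_mixed_loc sym irr)).
- apply: (gG2 _ _ (good_mixed_gca sym irr)).
Qed.
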